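(* Let $I=\{1,2\}$, $J=\{-1,-2\}$, and let $\{\tau_{m,n}(\boldsymbol t)\}_{(m,n)\in\mathbb Z^2}$ be a nowhere-vanishing solution of the lattice $q$-UC hierarchy satisfying the homogeneity condition $\tau_{m,n}(q\boldsymbol t)=q^{d_{m,n}}\tau_{m,n}(\boldsymbol t)$, where $d_{m,n}\in\mathbb C$ satisfy $d_{m,n}+d_{m+1,n+1}=d_{m,n+1}+d_{m+1,n}$. Put $w_{m,n}=\tau_{m+1,n}/\tau_{m,n+1}$, $c_{m,n}=q^{d_{m+1,n}-d_{m,n+1}}$ (so that $T_1T_2(w_{m,n})=c_{m,n}T_{-1}T_{-2}(w_{m,n})$), and $$f_{m,n}=\frac{w^{(1)}_{m,n}}{w^{(-1)}_{m,n}},\qquad g_{m,n}=\frac{w^{(1,-1)}_{m,n}}{w^{(-1,-2)}_{m,n}}.$$ Then, with $T=T_1T_2$ and whenever the denominators are nonzero, $$\frac{T(f_{m,n})}{f_{m+1,n+1}}=\frac{c_{m,n}}{c_{m,n+1}}\cdot\frac{\bigl(g_{m+1,n}-\frac{t_1}{t_{-2}}\bigr)\bigl(g_{m,n+1}-c_{m,n+1}\frac{t_{-1}}{t_2}\bigr)}{\bigl(g_{m,n+1}-\frac{t_1}{t_{-2}}\bigr)\bigl(g_{m+1,n}-c_{m+1,n}\frac{t_{-1}}{t_2}\bigr)},$$ $$\frac{g_{m,n}}{T^{-1}(g_{m+1,n+1})}=\frac{c_{m+1,n}}{c_{m+1,n+1}}\cdot\frac{\bigl(f_{m+1,n}-\frac{t_1}{t_{-1}}\bigr)\bigl(f_{m,n+1}-qc_{m,n+1}\frac{t_{-2}}{t_2}\bigr)}{\bigl(f_{m,n+1}-\frac{t_1}{t_{-1}}\bigr)\bigl(f_{m+1,n}-qc_{m+1,n}\frac{t_{-2}}{t_2}\bigr)}.$$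 Consequently, $T$ acts on the variables $f_{m,n},g_{m,n}$ by birational transformations: $T^{\pm1}(f_{m,n}),T^{\pm1}(g_{m,n})$ are rational functions of the $f_{k,l},g_{k,l}$ with coefficients rational in $t_{\pm1},t_{\pm2}$ and the $c_{k,l}$. Equivalently, with $\alpha=t_1/t_{-2}$, $\beta=t_{-1}/t_2$, $\gamma=t_1/t_{-1}$, $\delta=t_{-2}/t_2$ (so $\alpha\delta/(\beta\gamma)=1$ and $T:(\alpha,\beta,\gamma,\delta)\mapsto(q\alpha,\beta/q,q\gamma,\delta/q)$), writing $\overline F=T(F)$: $$\overline{f_{m,n}}=\frac{c_{m,n}}{c_{m,n+1}}\frac{(g_{m+1,n}-\alpha)(g_{m,n+1}-c_{m,n+1}\beta)}{(g_{m,n+1}-\alpha)(g_{m+1,n}-c_{m+1,n}\beta)}f_{m+1,n+1},$$ $$\overline{g_{m,n}}=\frac{c_{m+1,n}}{c_{m+1,n+1}}\frac{(\overline{f_{m+1,n}}-q\gamma)(\overline{f_{m,n+1}}-c_{m,n+1}\delta)}{(\overline{f_{m,n+1}}-q\gamma)(\overline{f_{m+1,n}}-c_{m+1,n}\delta)}g_{m+1,n+1}.$$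
   Context: $q\in\mathbb C^*$, $\boldsymbol t=(t_1,t_2,t_{-1},t_{-2})$. $T_k$ is the $q$-shift: $T_k(t_k)=qt_k$ for $k\in\{1,2\}$, $T_k(t_k)=q^{-1}t_k$ for $k\in\{-1,-2\}$, $T_k(t_l)=t_l$ for $l\ne k$. Notation: $F^{(i_1,\dots,i_r)}=T_{i_1}\cdots T_{i_r}(F)$. The lattice $q$-UC hierarchy is the system $$t_iT_i(\tau_{m,n+1})T_j(\tau_{m+1,n})-t_jT_j(\tau_{m,n+1})T_i(\tau_{m+1,n})=(t_i-t_j)T_iT_j(\tau_{m,n})\tau_{m+1,n+1}$$ for all $i,j\in\{1,2,-1,-2\}$ and all $(m,n)\in\mathbb Z^2$. *)

(* Defs.v *)
From HB Require Import structures.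
From mathcomp Require Import all_boot all_order all_algebra.
Set Implicit Arguments. Unset Strict Implicit. Unset Printing Implicit Defensive.
Import Order.TTheory GRing.Theory Num.Theory.
Local Open Scope ring_scope.

Record pt (R : Type) := Pt { t1 : R; t2 : R; tm1 : R; tm2 : R }.

Inductive idx := i1 | i2 | im1 | im2.

Section Defs.
Variable R : fieldType.
Variable q : R.

Definition tcomp (k : idx) (p : pt R) : R :=
  match k with i1 => t1 p | i2 => t2 p | im1 => tm1 p | im2 => tm2 p end.

Definition shift (k : idx) (p : pt R) : pt R :=
  match k with
  | i1 => Pt (q * t1 p) (t2 p) (tm1 p) (tm2 p)
  | i2 => Pt (t1 p) (q * t2 p) (tm1 p) (tm2 p)
  | im1 => Pt (t1 p) (t2 p) (q^-1 * tm1 p) (tm2 p)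
  | im2 => Pt (t1 p) (t2 p) (tm1 p) (q^-1 * tm2 p)
  end.

Definition Tk (k : idx) (F : pt R -> R) : pt R -> R := fun p => F (shift k p).

Definition TT (F : pt R -> R) : pt R -> R := Tk i1 (Tk i2 F).
Definition TTinv (F : pt R -> R) : pt R -> R :=
  fun p => F (Pt (q^-1 * t1 p) (q^-1 * t2 p) (tm1 p) (tm2 p)).

Definition scale (p : pt R) : pt R :=
  Pt (q * t1 p) (q * t2 p) (q * tm1 p) (q * tm2 p).

Definition admissible (p : pt R) : Prop :=
  (t1 p != 0) /\ (t2 p != 0) /\ (tm1 p != 0) /\ (tm2 p != 0).

Definition qUC_hierarchy (tau : int -> int -> pt R -> R) : Prop :=
  forall (i j : idx) (m n : int) (p : pt R), admissible p ->
    tcomp i p * Tk i (tau m (n + 1)) p * Tk j (tau (m + 1) n) p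
    - tcomp j p * Tk j (tau m (n + 1)) p * Tk i (tau (m + 1) n) p
    = (tcomp i p - tcomp j p) * Tk i (Tk j (tau m n)) p * tau (m + 1) (n + 1) p.

Definition w (tau : int -> int -> pt R -> R) (m n : int) : pt R -> R :=
  fun p => tau (m + 1) n p / tau m (n + 1) p.

(* c_{m,n} = q^{d_{m+1,n} - d_{m,n+1}}, with e_{m,n} standing for q^{d_{m,n}} *)
Definition cc (e : int -> int -> R) (m n : int) : R := e (m + 1) n / e m (n + 1).

Definition ff (tau : int -> int -> pt R -> R) (m n : int) : pt R -> R :=
  fun p => Tk i1 (w tau m n) p / Tk im1 (w tau m n) p.

Definition gg (tau : int -> int -> pt R -> R) (m n : int) : pt R -> R :=
  fun p => Tk i1 (Tk im1 (w tau m n)) p / Tk im1 (Tk im2 (w tau m n)) p.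

End Defs.

(* Main.v *)
Require Import Defs.
From HB Require Import structures.
From mathcomp Require Import all_boot all_order all_algebra.
From Stdlib Require Import Ring Field.
Import Order.TTheory GRing.Theory Num.Theory.
Local Open Scope ring_scope.

Section Main.
Variable R : numClosedFieldType.
Definition add' (x y : R) : R := x + y.
Definition mul' (x y : R) : R := x * y.
Definition opp' (x : R) : R := - x.
Definition inv' (x : R) : R := x^-1.
Definition sub' (x y : R) : R := add' x (opp' y).
Definition div' (x y : R) : R := mul' x (inv' y).
Definition one' : R := 1.
Definition zero' : R := 0.
Lemma addE (x y : R) : x + y = add' x y. Proof. by []. Qed.
Lemma mulE (x y : R) : x * y = mul' x y. Proof. by []. Qed.
Lemma oppE (x : R) : - x = opp' x. Proof. by []. Qed.
Lemma invE (x : R) : x^-1 = inv' x. Proof. by []. Qed.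
Lemma oneE : 1 = one' :> R. Proof. by []. Qed.
Lemma zeroE : 0 = zero' :> R. Proof. by []. Qed.
Lemma Rth : @ring_theory R zero' one' add' mul' sub' opp' eq.
Proof. split=> *; rewrite /add' /mul' /opp' /sub' /one' /zero'; [exact: add0r|exact: addrC|exact: addrA|exact: mul1r|exact: mulrC|exact: mulrA|exact: mulrDl|by []|exact: subrr]. Qed.
Lemma Fth : @field_theory R zero' one' add' mul' sub' opp' div' inv' eq.
Proof. split. exact Rth. rewrite /one' /zero'; apply/eqP; exact: oner_neq0. by []. intros p Hp; rewrite /mul' /inv' /one' mulVf //; exact/eqP. Qed.
Add Field Rfield : Fth.

Variable q : R.
Variable e : int -> int -> R.
Variable tau : int -> int -> pt R -> R.
Hypothesis hq : q != 0.
Hypothesis he : forall m n, e m n != 0.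
Hypothesis hUC : qUC_hierarchy q tau.
Hypothesis hnz : forall m n p, admissible p -> tau m n p != 0.
Hypothesis hhom : forall m n p, admissible p -> tau m n (scale q p) = e m n * tau m n p.

Ltac nz0 := match goal with
 | |- is_true (_ * _ != 0) => apply: mulf_neq0; nz0
 | |- is_true (_^-1 != 0) => rewrite invr_eq0; nz0
 | |- is_true (- _ != 0) => rewrite oppr_eq0; nz0
 | |- is_true (tau _ _ _ != 0) => apply: hnz; rewrite /admissible /=; (repeat split); nz0
 | |- is_true (e _ _ != 0) => apply: he
 | |- _ => assumption
 end.
Ltac unw := rewrite /sub' /div' /add' /mul' /opp' /inv' /one' /zero'.
Ltac rfld := match goal with |- ?a = ?b => change (@eq R a b) end;
  rewrite ?addE ?mulE ?oppE ?invE ?oneE ?zeroE; field; unw; (repeat split); try (apply/eqP; nz0).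

Lemma homT m n a b c d : a != 0 -> b != 0 -> c != 0 -> d != 0 ->
  tau m n (Pt (q * a) (q * b) c d) = e m n * tau m n (Pt a b (q^-1 * c) (q^-1 * d)).
Proof.
move=> ha hb hc hd; rewrite -hhom; last by rewrite /admissible /=; repeat split; nz0.
by rewrite /scale /= !mulVKf.
Qed.

Lemma homT' m n a b c d : a != 0 -> b != 0 -> c != 0 -> d != 0 ->
  tau m n (Pt (q * a) b c d) = e m n * tau m n (Pt a (q^-1 * b) (q^-1 * c) (q^-1 * d)).
Proof.
move=> ha hb hc hd; rewrite -homT; try nz0. by rewrite mulVKf.
Qed.

Lemma homInv m n a b c d : a != 0 -> b != 0 -> c != 0 -> d != 0 ->
  tau m n (Pt (q^-1 * a) (q^-1 * b) (q^-1 * c) (q^-1 * d)) = tau m n (Pt a b c d) / e m n.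
Proof.
move=> ha hb hc hd. rewrite -[in RHS](mulVKf hq a) -[in RHS](mulVKf hq b) homT; try nz0.
by rewrite [RHS]mulrC mulKf ?he.
Qed.

Lemma ptE (x : pt R) : Pt (t1 x) (t2 x) (tm1 x) (tm2 x) = x.
Proof. by case: x. Qed.

Lemma solve4 (t u U V W Z X Y : R) : u != 0 -> W != 0 ->
  t*U*V - u*W*Z = (t-u)*X*Y -> Z = (t*U*V - (t-u)*X*Y)/(u*W).
Proof. move=> hu hW E. rewrite -E. rfld. Qed.


Lemma solve4b (t u U V W Z X Y : R) : t != 0 -> U != 0 ->
  t*U*V - u*W*Z = (t-u)*X*Y -> V = (u*W*Z + (t-u)*X*Y)/(t*U).
Proof. move=> hu hW E. rewrite -E. rfld. Qed.

Arguments solve4 {t u U V W Z X Y}.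
Arguments solve4b {t u U V W Z X Y}.
Ltac absatoms := repeat match goal with
 | |- context [tau ?a ?b ?c] => let h := fresh "h" in let s := fresh "s" in
      (have h : tau a b c != 0 by nz0); set s := tau a b c in h *; clearbody s
 | |- context [e ?a ?b] => let h := fresh "h" in let s := fresh "s" in
      (have h : e a b != 0 by apply: he); set s := e a b in h *; clearbody s
 end;
 repeat match goal with
 | |- context [t1 ?p] => let s := fresh "s" in set s := t1 p in *; clearbody s
 | |- context [t2 ?p] => let s := fresh "s" in set s := t2 p in *; clearbody s
 | |- context [tm1 ?p] => let s := fresh "s" in set s := tm1 p in *; clearbody s
 | |- context [tm2 ?p] => let s := fresh "s" in set s := tm2 p in *; clearbody s
 end.
Ltac afld := try rewrite /cc; absatoms; rfld.
Ltac adm := rewrite /admissible /=; (repeat split); nz0.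

Lemma gA m n p : admissible p ->
 gg q tau m n p - t1 p / tm2 p =
 - ((t1 p - tm2 p) / tm2 p) * (tau m n (Pt (q * t1 p) (t2 p) (q^-1 * tm1 p) (q^-1 * tm2 p)) * tau (m+1) (n+1) (Pt (t1 p) (t2 p) (q^-1 * tm1 p) (tm2 p)))
   / (tau m (n+1) (Pt (q * t1 p) (t2 p) (q^-1 * tm1 p) (tm2 p)) * tau (m+1) n (Pt (t1 p) (t2 p) (q^-1 * tm1 p) (q^-1 * tm2 p))).
Proof.
move=> hp; have hp' := hp; case: hp' => h1 [h2 [h3 h4]].
have E := hUC i1 im2 m n (shift q im1 p) ltac:(adm).
rewrite /Tk /tcomp /= in E.
rewrite /gg /Tk /w /= (solve4 _ _ E); try nz0.
afld.
Qed.

Lemma gB m n p : admissible p ->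
 gg q tau m n p - cc e m n * (tm1 p / t2 p) =
 cc e m n * ((t2 p - tm1 p) / t2 p) * (tau m n (Pt (q * t1 p) (q * t2 p) (q^-1 * tm1 p) (tm2 p)) * tau (m+1) (n+1) (Pt (q * t1 p) (t2 p) (tm1 p) (tm2 p)))
   / (tau m (n+1) (Pt (q * t1 p) (t2 p) (q^-1 * tm1 p) (tm2 p)) * tau (m+1) n (Pt (q * t1 p) (q * t2 p) (tm1 p) (tm2 p))).
Proof.
move=> hp; have hp' := hp; case: hp' => h1 [h2 [h3 h4]].
have E := hUC i2 im1 m n (shift q i1 p) ltac:(adm).
rewrite /Tk /tcomp /= in E.
rewrite !homT in E; try nz0.
rewrite /gg /Tk /w /cc /= !homT; try nz0.
rewrite (solve4b _ _ E); try nz0.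
afld.
Qed.

Lemma fA m n p : admissible p ->
 ff q tau m n p - t1 p / tm1 p =
 - ((t1 p - tm1 p) / tm1 p) * (tau m n (Pt (q * t1 p) (t2 p) (q^-1 * tm1 p) (tm2 p)) * tau (m+1) (n+1) p)
   / (tau m (n+1) (Pt (q * t1 p) (t2 p) (tm1 p) (tm2 p)) * tau (m+1) n (Pt (t1 p) (t2 p) (q^-1 * tm1 p) (tm2 p))).
Proof.
move=> hp; have hp' := hp; case: hp' => h1 [h2 [h3 h4]].
have E := hUC i1 im1 m n p hp.
rewrite /Tk /tcomp /= in E.
rewrite /ff /Tk /w /= (solve4 _ _ E); try nz0.
afld.
Qed.

Lemma fB m n p : admissible p ->
 ff q tau m n p - q * cc e m n * (tm2 p / t2 p) =
 cc e m n * e m (n+1) * ((t2 p - q * tm2 p) / t2 p) * (tau m n (Pt (t1 p) (t2 p) (q^-1 * tm1 p) (q^-1 * tm2 p)) * tau (m+1) (n+1) (Pt (t1 p) (q^-1 * t2 p) (q^-1 * tm1 p) (tm2 p)))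
   / (tau m (n+1) (Pt (q * t1 p) (t2 p) (tm1 p) (tm2 p)) * tau (m+1) n (Pt (t1 p) (t2 p) (q^-1 * tm1 p) (tm2 p))).
Proof.
move=> hp; have hp' := hp; case: hp' => h1 [h2 [h3 h4]].
have E := hUC i2 im2 m n (Pt (t1 p) (q^-1 * t2 p) (q^-1 * tm1 p) (tm2 p)) ltac:(adm).
rewrite /Tk /tcomp /= !mulVKf // in E.
rewrite /ff /Tk /w /cc /= !homT'; try nz0.
rewrite (solve4b _ _ E); try nz0.
afld.
Qed.

Lemma id1 m n p : admissible p ->
  (gg q tau m (n + 1) p - t1 p / tm2 p) * (gg q tau (m + 1) n p - cc e (m + 1) n * (tm1 p / t2 p)) != 0 ->
        TT q (ff q tau m n) p / ff q tau (m + 1) (n + 1) p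
        = cc e m n / cc e m (n + 1)
          * ((gg q tau (m + 1) n p - t1 p / tm2 p) * (gg q tau m (n + 1) p - cc e m (n + 1) * (tm1 p / t2 p)))
          / ((gg q tau m (n + 1) p - t1 p / tm2 p) * (gg q tau (m + 1) n p - cc e (m + 1) n * (tm1 p / t2 p))).
Proof.
move=> hp H; have hp' := hp; case: hp' => h1 [h2 [h3 h4]].
rewrite (gA (m+1) n p hp) (gB m (n+1) p hp) (gA m (n+1) p hp) (gB (m+1) n p hp) in H *.
have k1 : t1 p - tm2 p != 0.
  by apply/eqP => E0; move: H; rewrite E0 !(mul0r, mulr0, oppr0) eqxx.
have k2 : t2 p - tm1 p != 0.
  by apply/eqP => E0; move: H; rewrite E0 !(mul0r, mulr0, oppr0) eqxx.
clear H.
rewrite /TT /ff /Tk /w /= !homT; try nz0.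
afld.
Qed.

Lemma id2 m n p : admissible p ->
  (ff q tau m (n + 1) p - t1 p / tm1 p) * (ff q tau (m + 1) n p - q * cc e (m + 1) n * (tm2 p / t2 p)) != 0 ->
        gg q tau m n p / TTinv q (gg q tau (m + 1) (n + 1)) p
        = cc e (m + 1) n / cc e (m + 1) (n + 1)
          * ((ff q tau (m + 1) n p - t1 p / tm1 p) * (ff q tau m (n + 1) p - q * cc e m (n + 1) * (tm2 p / t2 p)))
          / ((ff q tau m (n + 1) p - t1 p / tm1 p) * (ff q tau (m + 1) n p - q * cc e (m + 1) n * (tm2 p / t2 p))).
Proof.
move=> hp H; have hp' := hp; case: hp' => h1 [h2 [h3 h4]].
rewrite (fA (m+1) n p hp) (fB m (n+1) p hp) (fA m (n+1) p hp) (fB (m+1) n p hp) in H *.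
have k1 : t1 p - tm1 p != 0.
  by apply/eqP => E0; move: H; rewrite E0 !(mul0r, mulr0, oppr0) eqxx.
have k2 : t2 p - q * tm2 p != 0.
  by apply/eqP => E0; move: H; rewrite E0 !(mul0r, mulr0, oppr0) eqxx.
clear H.
rewrite /TTinv /gg /Tk /w /= !mulVKf // !homInv; try nz0.
rewrite !ptE.
afld.
Qed.

Lemma mainS : forall (m n : int) (p : pt R), admissible p ->
  let f := ff q tau in
  let g := gg q tau in
  let c := cc e in
  let alpha := t1 p / tm2 p in
  let beta := tm1 p / t2 p in
  let gamma := t1 p / tm1 p in
  let delta := tm2 p / t2 p in
  [/\ (g m (n + 1) p - alpha) * (g (m + 1) n p - c (m + 1) n * beta) != 0 ->
        TT q (f m n) p / f (m + 1) (n + 1) p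
        = c m n / c m (n + 1)
          * ((g (m + 1) n p - alpha) * (g m (n + 1) p - c m (n + 1) * beta))
          / ((g m (n + 1) p - alpha) * (g (m + 1) n p - c (m + 1) n * beta)),
      (f m (n + 1) p - gamma) * (f (m + 1) n p - q * c (m + 1) n * delta) != 0 ->
        g m n p / TTinv q (g (m + 1) (n + 1)) p
        = c (m + 1) n / c (m + 1) (n + 1)
          * ((f (m + 1) n p - gamma) * (f m (n + 1) p - q * c m (n + 1) * delta))
          / ((f m (n + 1) p - gamma) * (f (m + 1) n p - q * c (m + 1) n * delta)),
      (g m (n + 1) p - alpha) * (g (m + 1) n p - c (m + 1) n * beta) != 0 ->
        TT q (f m n) p
        = c m n / c m (n + 1)
          * ((g (m + 1) n p - alpha) * (g m (n + 1) p - c m (n + 1) * beta))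
          / ((g m (n + 1) p - alpha) * (g (m + 1) n p - c (m + 1) n * beta))
          * f (m + 1) (n + 1) p &
      (TT q (f m (n + 1)) p - q * gamma) * (TT q (f (m + 1) n) p - c (m + 1) n * delta) != 0 ->
        TT q (g m n) p
        = c (m + 1) n / c (m + 1) (n + 1)
          * ((TT q (f (m + 1) n) p - q * gamma) * (TT q (f m (n + 1)) p - c m (n + 1) * delta))
          / ((TT q (f m (n + 1)) p - q * gamma) * (TT q (f (m + 1) n) p - c (m + 1) n * delta))
          * g (m + 1) (n + 1) p].
Proof.
move=> m n p hp; cbv zeta.
have hp0 := hp; case: hp0 => h1 [h2 [h3 h4]].
split.
- exact: (id1 m n p hp).
- exact: (id2 m n p hp).
- move=> H; have fnz : ff q tau (m + 1) (n + 1) p != 0 by rewrite /ff /Tk /w /=; nz0.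
  by rewrite -(id1 m n p hp H) divfK.
- move=> H.
  have hp' : admissible (Pt (q * t1 p) (q * t2 p) (tm1 p) (tm2 p)) by adm.
  have TTE : forall F, TT q F p = F (Pt (q * t1 p) (q * t2 p) (tm1 p) (tm2 p)) by [].
  have TIE : forall G, TTinv q G (Pt (q * t1 p) (q * t2 p) (tm1 p) (tm2 p)) = G p.
    by move=> G; rewrite /TTinv /= !mulKf // ptE.
  have eg : q * t1 p / tm1 p = q * (t1 p / tm1 p) by rewrite mulrA.
  have ed : forall k, q * k * (tm2 p / (q * t2 p)) = k * (tm2 p / t2 p).
    by move=> k; rfld.
  have gnz : gg q tau (m + 1) (n + 1) p != 0 by rewrite /gg /Tk /w /=; nz0.
  move: (id2 m n _ hp'); rewrite /= TIE eg !ed.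
  rewrite !TTE in H *.
  move=> E2; by rewrite -(E2 H) divfK.
Qed.

End Main.


Theorem mainTheorem5 (R : numClosedFieldType) (q : R)
  (e : int -> int -> R) (tau : int -> int -> pt R -> R) :
  q != 0 ->
  (forall m n, e m n != 0) ->
  (forall m n, e m n * e (m + 1) (n + 1) = e m (n + 1) * e (m + 1) n) ->
  qUC_hierarchy q tau ->
  (forall m n p, admissible p -> tau m n p != 0) ->
  (forall m n p, admissible p -> tau m n (scale q p) = e m n * tau m n p) ->
  forall (m n : int) (p : pt R), admissible p ->
  let f := ff q tau in
  let g := gg q tau in
  let c := cc e in
  let alpha := t1 p / tm2 p in
  let beta := tm1 p / t2 p in
  let gamma := t1 p / tm1 p in
  let delta := tm2 p / t2 p in
  [/\ (g m (n + 1) p - alpha) * (g (m + 1) n p - c (m + 1) n * beta) != 0 ->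
        TT q (f m n) p / f (m + 1) (n + 1) p
        = c m n / c m (n + 1)
          * ((g (m + 1) n p - alpha) * (g m (n + 1) p - c m (n + 1) * beta))
          / ((g m (n + 1) p - alpha) * (g (m + 1) n p - c (m + 1) n * beta)),
      (f m (n + 1) p - gamma) * (f (m + 1) n p - q * c (m + 1) n * delta) != 0 ->
        g m n p / TTinv q (g (m + 1) (n + 1)) p
        = c (m + 1) n / c (m + 1) (n + 1)
          * ((f (m + 1) n p - gamma) * (f m (n + 1) p - q * c m (n + 1) * delta))
          / ((f m (n + 1) p - gamma) * (f (m + 1) n p - q * c (m + 1) n * delta)),
      (g m (n + 1) p - alpha) * (g (m + 1) n p - c (m + 1) n * beta) != 0 ->
        TT q (f m n) p
        = c m n / c m (n + 1)
          * ((g (m + 1) n p - alpha) * (g m (n + 1) p - c m (n + 1) * beta))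
          / ((g m (n + 1) p - alpha) * (g (m + 1) n p - c (m + 1) n * beta))
          * f (m + 1) (n + 1) p &
      (TT q (f m (n + 1)) p - q * gamma) * (TT q (f (m + 1) n) p - c (m + 1) n * delta) != 0 ->
        TT q (g m n) p
        = c (m + 1) n / c (m + 1) (n + 1)
          * ((TT q (f (m + 1) n) p - q * gamma) * (TT q (f m (n + 1)) p - c m (n + 1) * delta))
          / ((TT q (f m (n + 1)) p - q * gamma) * (TT q (f (m + 1) n) p - c (m + 1) n * delta))
          * g (m + 1) (n + 1) p].
Proof.
move=> hq he _ hUC hnz hhom; exact: mainS.
Qed.
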